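(* Let $M,N\in\mathbb{S}^{q+r}$. If there exists a real $\alpha\ge 0$ such that $M-\alpha N\ge 0$, then $\mathcal{Z}_r(N)\subseteq\mathcal{Z}_r(M)$. Moreover, if $N\in\boldsymbol{\Pi}_{q,r}$ and $N$ has at least one positive eigenvalue, then $\mathcal{Z}_r(N)\subseteq\mathcal{Z}_r(M)$ if and only if there exists a real $\alpha\ge 0$ such that $M-\alpha N\ge 0$.
   Context: $\mathbb{S}^k$ denotes the real symmetric $k\times k$ matrices; for symmetric matrices, $A\ge 0$ means positive semidefinite. $A^\dagger$ is the Moore–Penrose pseudo-inverse. Any $N\in\mathbb{S}^{q+r}$ is partitioned as $N=\begin{bmatrix}N_{11}&N_{12}\\ N_{21}&N_{22}\end{bmatrix}$ with $N_{11}\in\mathbb{S}^q$, $N_{22}\in\mathbb{S}^r$. The generalized Schur complement is $N\mid N_{22}:=N_{11}-N_{12}N_{22}^\dagger N_{21}$. The set $\boldsymbol{\Pi}_{q,r}$ consists of all $N\in\mathbb{S}^{q+r}$ with $N_{22}\le 0$, $N\mid N_{22}\ge 0$ and $\ker N_{22}\subseteq\ker N_{12}$. Define $\mathcal{Z}_r(\Pi)=\{Z\in\mathbb{R}^{r\times q}:\begin{bmatrix}I_q\\ Z\end{bmatrix}^\top\Pi\begin{bmatrix}I_q\\ Z\end{bmatrix}\ge 0\}$. *)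

(* Defs.v *)
From HB Require Import structures.
From mathcomp Require Import all_boot all_order all_algebra.
From mathcomp Require Import boolp classical_sets reals.
Set Implicit Arguments. Unset Strict Implicit. Unset Printing Implicit Defensive.
Import Order.TTheory GRing.Theory Num.Theory.
Local Open Scope ring_scope.

Definition sym_mx (R : realType) (n : nat) (A : 'M[R]_n) : Prop := A^T = A.

(* Positive semidefinite: the quadratic form is nonnegative
   (used only on symmetric matrices, as in the paper). *)
Definition psd_mx (R : realType) (n : nat) (A : 'M[R]_n) : Prop :=
  forall v : 'cV[R]_n, 0 <= (v^T *m A *m v) ord0 ord0.

Definition is_MP_pinv (R : realType) (m n : nat) (A : 'M[R]_(m, n))
  (X : 'M[R]_(n, m)) : Prop :=
  [/\ A *m X *m A = A, X *m A *m X = X,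
      (A *m X)^T = A *m X & (X *m A)^T = X *m A].

(* The Moore-Penrose pseudo-inverse (exists and is unique; chosen via xget). *)
Definition mp_pinv (R : realType) (m n : nat) (A : 'M[R]_(m, n)) : 'M[R]_(n, m) :=
  xget 0 (is_MP_pinv A).

Definition gschur (R : realType) (q r : nat) (N : 'M[R]_(q + r)) : 'M[R]_q :=
  ulsubmx N - ursubmx N *m mp_pinv (drsubmx N) *m dlsubmx N.

Definition Pi_set (R : realType) (q r : nat) (N : 'M[R]_(q + r)) : Prop :=
  [/\ sym_mx N,
      psd_mx (- drsubmx N),
      psd_mx (gschur N) &
      forall v : 'cV[R]_r, drsubmx N *m v = 0 -> ursubmx N *m v = 0].

Definition Zset (R : realType) (q r : nat) (P : 'M[R]_(q + r)) (Z : 'M[R]_(r, q))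
  : Prop :=
  psd_mx ((col_mx 1%:M Z)^T *m P *m col_mx 1%:M Z).

(* Main.v *)
Require Import Defs.
From HB Require Import structures.
From mathcomp Require Import all_boot all_order all_algebra.
From mathcomp Require Import boolp classical_sets reals.
From mathcomp Require Import ring lra.
Import Order.TTheory GRing.Theory Num.Theory.
Local Open Scope ring_scope.

Set Implicit Arguments. Unset Strict Implicit. Unset Printing Implicit Defensive.


Section QF.
Variable R : realType.

Definition bf n (A : 'M[R]_n) (x y : 'cV[R]_n) : R := (x^T *m A *m y) (@ord0 0) (@ord0 0).
Definition qf n (A : 'M[R]_n) (x : 'cV[R]_n) : R := bf A x x.

Lemma bfDl n (A : 'M[R]_n) x y z : bf A (x + y) z = bf A x z + bf A y z.
Proof. by rewrite /bf linearD /= !mulmxDl mxE. Qed.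
Lemma bfDr n (A : 'M[R]_n) x y z : bf A z (x + y) = bf A z x + bf A z y.
Proof. by rewrite /bf mulmxDr mxE. Qed.
Lemma bfZl n (A : 'M[R]_n) c x y : bf A (c *: x) y = c * bf A x y.
Proof. by rewrite /bf linearZ /= -!scalemxAl mxE. Qed.
Lemma bfZr n (A : 'M[R]_n) c x y : bf A x (c *: y) = c * bf A x y.
Proof. by rewrite /bf -scalemxAr mxE. Qed.
Lemma bfNr n (A : 'M[R]_n) x y : bf A x (- y) = - bf A x y.
Proof. by rewrite -scaleN1r bfZr mulN1r. Qed.
Lemma bfNl n (A : 'M[R]_n) x y : bf A (- x) y = - bf A x y.
Proof. by rewrite -scaleN1r bfZl mulN1r. Qed.
Lemma bf_sym n (A : 'M[R]_n) x y : A^T = A -> bf A x y = bf A y x.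
Proof.
move=> sA; rewrite /bf -[in RHS](trmxK (y^T *m A *m x)) [in RHS]mxE.
by rewrite !trmx_mul trmxK sA mulmxA.
Qed.
Lemma bf_mat n (A B : 'M[R]_n) c x y : bf (A - c *: B) x y = bf A x y - c * bf B x y.
Proof. by rewrite /bf mulmxBr mulmxBl -scalemxAr -scalemxAl !mxE. Qed.
Lemma qfD n (A : 'M[R]_n) x y :
  qf A (x + y) = qf A x + qf A y + (bf A x y + bf A y x).
Proof. rewrite /qf bfDl !bfDr; ring. Qed.
Lemma qfZ n (A : 'M[R]_n) c x : qf A (c *: x) = c ^+ 2 * qf A x.
Proof. by rewrite /qf bfZl bfZr mulrA expr2. Qed.
Lemma qf_sym_lin n (A : 'M[R]_n) x y t : A^T = A ->
  qf A (x + t *: y) = qf A x + 2 * t * bf A x y + t ^+ 2 * qf A y.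
Proof. move=> sA; rewrite qfD qfZ bfZr bfZl (bf_sym _ _ sA); ring. Qed.
Lemma qf_lin n (A : 'M[R]_n) x y t :
  qf A (x + t *: y) = qf A x + t * (bf A x y + bf A y x) + t ^+ 2 * qf A y.
Proof. rewrite qfD qfZ bfZr bfZl; ring. Qed.

Lemma qf_mul m n (A : 'M[R]_m) (C : 'M[R]_(m, n)) u :
  qf (C^T *m A *m C) u = qf A (C *m u).
Proof. by rewrite /qf /bf trmx_mul !mulmxA. Qed.

Lemma psdP n (A : 'M[R]_n) : (forall v : 'cV_n, 0 <= (v^T *m A *m v) ord0 ord0) <-> (forall v, 0 <= qf A v).
Proof. by []. Qed.

Lemma quad_lead (a b c : R) : (forall t, 0 <= a + t * b + t ^+ 2 * c) -> 0 <= c.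
Proof.
move=> H; rewrite leNgt; apply/negP => c0.
set k := `|a| + `|b| + 1.
have k1 : 1 <= k by rewrite /k lerDr addr_ge0.
set t := k / (- c) + 1.
have nc : 0 < - c by rewrite oppr_gt0.
have kc : 0 <= k / (- c) by rewrite divr_ge0 //; lra.
have tc : k <= t * (- c).
  by rewrite /t mulrDl divfK ?gt_eqF //; lra.
have t1 : 1 <= t by rewrite /t; lra.
have := H t.
have ha : a <= `|a| := ler_norm a.
have hb : t * b <= t * `|b| by rewrite ler_wpM2l ?ler_norm //; lra.
have hat : `|a| <= `|a| * t by rewrite ler_peMr.
have e : t ^+ 2 * c = - (t * (t * - c)) by rewrite expr2; ring.
have e2 : t * k <= t * (t * - c) by rewrite ler_wpM2l //; lra.
rewrite e; rewrite /k in e2; nra.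
Qed.

Lemma roots2 (gx gy b : R) : 0 < gx -> gy < 0 ->
  exists t1 t2, [/\ t1 < 0, 0 < t2, gy + t1 * b + t1 ^+ 2 * gx = 0 &
                     gy + t2 * b + t2 ^+ 2 * gx = 0].
Proof.
move=> hx hy.
set D := b ^+ 2 - 4 * gx * gy.
have D0 : 0 <= D by rewrite /D; nra.
set s := Num.sqrt D.
have s0 : 0 <= s := sqrtr_ge0 D.
have s2 : s ^+ 2 = D by rewrite sqr_sqrtr.
have sb : b < s by rewrite /D in s2; nra.
have sb' : - b < s by rewrite /D in s2; nra.
have gx0 : gx != 0 by rewrite gt_eqF.
exists ((- b - s) / (2 * gx)), ((- b + s) / (2 * gx)); split.
- by rewrite pmulr_llt0 ?invr_gt0 ?mulr_gt0 //; lra.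
- by rewrite pmulr_lgt0 ?invr_gt0 ?mulr_gt0 //; lra.
- set u := (- b - s) / (2 * gx).
  have hu : u * (2 * gx) = - b - s by rewrite /u divfK // mulf_neq0 // pnatr_eq0.
  have g4 : 4 * gx != 0 by rewrite mulf_neq0 // pnatr_eq0.
  apply: (mulfI g4); rewrite mulr0.
  have -> : 4 * gx * (gy + u * b + u ^+ 2 * gx) = 4 * gx * gy + 2 * (u * (2 * gx)) * b + (u * (2 * gx)) ^+ 2 by ring.
  by rewrite hu; rewrite /D in s2; nra.
- set u := (- b + s) / (2 * gx).
  have hu : u * (2 * gx) = - b + s by rewrite /u divfK // mulf_neq0 // pnatr_eq0.
  have g4 : 4 * gx != 0 by rewrite mulf_neq0 // pnatr_eq0.
  apply: (mulfI g4); rewrite mulr0.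
  have -> : 4 * gx * (gy + u * b + u ^+ 2 * gx) = 4 * gx * gy + 2 * (u * (2 * gx)) * b + (u * (2 * gx)) ^+ 2 by ring.
  by rewrite hu; rewrite /D in s2; nra.
Qed.

Lemma two_point n (A B : 'M[R]_n) x y :
  (forall z, 0 <= qf B z -> 0 <= qf A z) -> 0 < qf B x -> qf B y < 0 ->
  qf A x * qf B y <= qf A y * qf B x.
Proof.
move=> H gx gy.
have [t1 [t2 [t10 t20 e1 e2]]] := roots2 (bf B y x + bf B x y) gx gy.
have h1 := H (y + t1 *: x); have h2 := H (y + t2 *: x).
rewrite !qf_lin in h1 h2.
rewrite e1 lexx in h1; rewrite e2 lexx in h2.
have {}h1 := h1 isT; have {}h2 := h2 isT.
set fx := qf A x in h1 h2 *; set fy := qf A y in h1 h2 *.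
set gX := qf B x in gx e1 e2 *; set gY := qf B y in gy e1 e2 *.
set bA := bf A y x + bf A x y in h1 h2.
set bB := bf B y x + bf B x y in e1 e2.
have L1 : 0 <= (fy * gX - fx * gY) + t1 * (bA * gX - fx * bB).
  have -> : (fy * gX - fx * gY) + t1 * (bA * gX - fx * bB) = (fy + t1 * bA + t1 ^+ 2 * fx) * gX - fx * (gY + t1 * bB + t1 ^+ 2 * gX) by ring.
  by rewrite e1 mulr0 subr0 mulr_ge0 // ltW.
have L2 : 0 <= (fy * gX - fx * gY) + t2 * (bA * gX - fx * bB).
  have -> : (fy * gX - fx * gY) + t2 * (bA * gX - fx * bB) = (fy + t2 * bA + t2 ^+ 2 * fx) * gX - fx * (gY + t2 * bB + t2 ^+ 2 * gX) by ring.
  by rewrite e2 mulr0 subr0 mulr_ge0 // ltW.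
nra.
Qed.

Lemma S_lemma n (A B : 'M[R]_n) xb :
  (forall z, 0 <= qf B z -> 0 <= qf A z) -> 0 < qf B xb ->
  exists alpha, 0 <= alpha /\ forall z, 0 <= qf A z - alpha * qf B z.
Proof.
move=> H gxb.
pose E : set R := fun w => w = 0 \/ exists y, qf B y < 0 /\ w = qf A y / qf B y.
have fxb : 0 <= qf A xb by apply: H; rewrite ltW.
have ubx : forall x, 0 < qf B x -> ubound E (qf A x / qf B x).
  move=> x gx w [->|[y [gy ->]]]; first by rewrite divr_ge0 //; [apply: H|]; rewrite ltW.
  have := two_point H gx gy.
  by rewrite ler_pdivlMr // mulrAC ler_ndivrMr // mulrC [qf A y * _]mulrC.
have E0 : E 0 by left.
have hs : has_sup E by split; [exists 0 | exists (qf A xb / qf B xb); exact: ubx].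
exists (sup E); split; first exact: sup_upper_bound.
move=> z; have [gz|gz|gz] := ltgtP (qf B z) 0.
- have : qf A z / qf B z <= sup E by apply: sup_upper_bound => //; right; exists z.
  by rewrite ler_ndivrMr // subr_ge0.
- have : sup E <= qf A z / qf B z by apply: ge_sup; [exists 0|exact: ubx].
  by rewrite ler_pdivlMr // subr_ge0.
- by rewrite gz mulr0 subr0; apply: H; rewrite gz.
Qed.

End QF.



Section MP.
Variable R : realType.

Lemma rV_sq0 p (w : 'rV[R]_p) : (w *m w^T) ord0 ord0 = 0 -> w = 0.
Proof.
rewrite mxE => h.
have h' : forall j, true -> w ord0 j * w^T j ord0 = 0.
  apply: psumr_eq0P h => j _; rewrite mxE -expr2; exact: sqr_ge0.
apply/matrixP => i j; rewrite (ord1 i) mxE.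
by have := h' j isT; rewrite mxE; move/eqP; rewrite mulf_eq0 orbb => /eqP.
Qed.

Lemma gram_unit k p (B : 'M[R]_(p, k)) : row_free B^T -> (B^T *m B) \in unitmx.
Proof.
move=> fB; rewrite unitmxE unitfE; apply/negP => /det0P [v v0 hv].
have w0 : v *m B^T = 0.
  apply: rV_sq0; rewrite trmx_mul trmxK mulmxA -(mulmxA v) hv mul0mx mxE //.
move/negP: v0; apply; apply/eqP.
by apply: (row_free_inj fB); rewrite w0 mul0mx.
Qed.

Lemma MP_BC m n k (B : 'M[R]_(m, k)) (C : 'M[R]_(k, n)) :
  row_free B^T -> row_free C -> exists X, is_MP_pinv (B *m C) X.
Proof.
move=> fB fC.
set G1 := B^T *m B; set G2 := C *m C^T.
have u1 : G1 \in unitmx := gram_unit fB.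
have u2 : G2 \in unitmx by rewrite /G2 -[C in C *m _]trmxK; apply: gram_unit; rewrite trmxK.
have k1 p (Y : 'M[R]_(p, k)) : Y *m invmx G1 *m G1 = Y by rewrite -mulmxA mulVmx // mulmx1.
have k2 p (Y : 'M[R]_(p, k)) : Y *m G2 *m invmx G2 = Y by rewrite -mulmxA mulmxV // mulmx1.
have k2' p (Y : 'M[R]_(p, k)) : Y *m invmx G2 *m G2 = Y by rewrite -mulmxA mulVmx // mulmx1.
exists (C^T *m invmx G2 *m invmx G1 *m B^T).
have sG1 : G1^T = G1 by rewrite /G1 trmx_mul trmxK.
have sG2 : G2^T = G2 by rewrite /G2 trmx_mul trmxK.
have AX : (B *m C) *m (C^T *m invmx G2 *m invmx G1 *m B^T) = B *m invmx G1 *m B^T.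
  by rewrite !mulmxA -(mulmxA B C) -/G2 k2.
have XA : (C^T *m invmx G2 *m invmx G1 *m B^T) *m (B *m C) = C^T *m invmx G2 *m C.
  by rewrite !mulmxA -(mulmxA _ B^T B) -/G1 k1.
split.
- by rewrite AX !mulmxA -(mulmxA _ B^T B) -/G1 k1.
- by rewrite XA !mulmxA -(mulmxA _ C C^T) -/G2 k2'.
- by rewrite AX !trmx_mul trmxK trmx_inv sG1 mulmxA.
- by rewrite XA !trmx_mul trmxK trmx_inv sG2 mulmxA.
Qed.

Lemma MP_exists m n (A : 'M[R]_(m, n)) : exists X, is_MP_pinv A X.
Proof.
have fB : row_free (col_base A)^T by rewrite /row_free mxrank_tr; exact: col_base_full.
have := MP_BC fB (row_base_free A); by rewrite mulmx_base.
Qed.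

Lemma mp_pinvP m n (A : 'M[R]_(m, n)) : is_MP_pinv A (mp_pinv A).
Proof. by rewrite /mp_pinv; case: (MP_exists A) => X hX; apply: xgetPex; exists X. Qed.

End MP.



Section Main.
Variable R : realType.

Lemma qf_tr n (A : 'M[R]_n) x : qf A^T x = qf A x.
Proof.
rewrite /qf /bf -[in RHS](trmxK (x^T *m A *m x)) [in RHS]mxE !trmx_mul trmxK -mulmxA.
by [].
Qed.
Lemma qfB n (A B : 'M[R]_n) x : qf (A - B) x = qf A x - qf B x.
Proof. by rewrite /qf /bf mulmxBr mulmxBl !mxE. Qed.
Lemma qfDm n (A B : 'M[R]_n) x : qf (A + B) x = qf A x + qf B x.
Proof. by rewrite /qf /bf mulmxDr mulmxDl !mxE. Qed.
Lemma qfN n (A : 'M[R]_n) x : qf (- A) x = - qf A x.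
Proof. by rewrite /qf /bf mulmxN mulNmx mxE. Qed.
Lemma qf0 n (A : 'M[R]_n) : qf A 0 = 0.
Proof. by rewrite /qf /bf mulmx0 mxE. Qed.

Lemma mx11 p (X : 'M[R]_(p, 1)) (c : 'M[R]_1) : X *m c = c ord0 ord0 *: X.
Proof. by apply/matrixP=> i j; rewrite (ord1 j) !mxE big_ord1 mulrC. Qed.

Lemma cV_pos p (x : 'cV[R]_p) : x != 0 -> 0 < (x^T *m x) ord0 ord0.
Proof.
move=> x0.
have ge : 0 <= (x^T *m x) ord0 ord0.
  by rewrite mxE; apply: sumr_ge0 => j _; rewrite !mxE -expr2 sqr_ge0.
rewrite lt_neqAle ge andbT; apply/eqP => h; move/eqP: x0; apply.
have := @rV_sq0 R p x^T; rewrite trmxK => /(_ (esym h)) h1.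
by rewrite -(trmxK x) h1 trmx0.
Qed.

Lemma lin0 (b c : R) : (forall t, 0 <= t * b + t ^+ 2 * c) -> b = 0.
Proof.
move=> H.
have c0 : 0 <= c by apply: (@quad_lead R 0 b c) => t; rewrite add0r.
set t := - b / (c + 1).
have ht : t * (c + 1) = - b by rewrite /t divfK // gt_eqF //; lra.
have := H t.
have -> : t * b + t ^+ 2 * c = - t ^+ 2.
  have -> : b = - (t * (c + 1)) by rewrite ht opprK.
  ring.
rewrite oppr_ge0 => h.
have t0 : t = 0 by apply/eqP; rewrite -sqrf_eq0 eq_le h sqr_ge0.
by move: ht; rewrite t0 mul0r => /eqP; rewrite eq_sym oppr_eq0 => /eqP.
Qed.

Lemma psd_ker n (A : 'M[R]_n) y : A^T = A -> (forall x, 0 <= qf A x) ->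
  qf A y = 0 -> A *m y = 0.
Proof.
move=> sA H h0.
have hb z : bf A y z = 0.
  have : 2 * bf A y z = 0.
    apply: (@lin0 _ (qf A z)) => t.
    have := H (y + t *: z); rewrite qf_sym_lin // h0 add0r.
    by rewrite (_ : 2 * t * _ = t * (2 * bf A y z)) //; ring.
  by move/eqP; rewrite mulf_eq0 pnatr_eq0 /= => /eqP.
have := hb (A *m y); rewrite /bf.
rewrite -{1}sA -trmx_mul => e.
apply/eqP; apply: contraT => ne; have := cV_pos ne.
by rewrite e ltxx.
Qed.

Lemma rowblock q r p (A : 'M[R]_(q + r)) (X : 'M[R]_(p, q)) (Y : 'M[R]_(p, r)) :
  row_mx X Y *m A = row_mx (X *m ulsubmx A + Y *m dlsubmx A)
                           (X *m ursubmx A + Y *m drsubmx A).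
Proof. by rewrite -{1}(submxK A) mul_row_block. Qed.

Lemma qf_col0 q r (A : 'M[R]_(q + r)) b : qf A (col_mx 0 b) = qf (drsubmx A) b.
Proof.
rewrite /qf /bf tr_col_mx trmx0 rowblock mul_row_col mulmx0 add0r. by rewrite (mul0mx _ (ursubmx A)) add0r.
Qed.

Lemma ZsetP q r (A : 'M[R]_(q + r)) Z :
  Zset A Z <-> forall u, 0 <= qf A (col_mx u (Z *m u)).
Proof.
rewrite /Zset /psd_mx; split => h u; have := h u;
  rewrite -[_ ord0 ord0]/(qf _ u) qf_mul mul_col_mx mul1mx //.
Qed.

End Main.



Section Key.
Variable R : realType.

Lemma key q r (N : 'M[R]_(q + r)) : N^T = N ->
  (forall v : 'cV_r, drsubmx N *m v = 0 -> ursubmx N *m v = 0) ->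
  forall (a : 'cV_q) (b : 'cV_r), qf N (col_mx a (- (mp_pinv (drsubmx N : 'M_r) *m (dlsubmx N : 'M_(r, q))) *m a + b))
              = qf (gschur N) a + qf (drsubmx N : 'M_r) b.
Proof.
move=> sN hker a b.
rewrite /gschur.
set N11 := ulsubmx N; set N12 := ursubmx N; set N21 := dlsubmx N; set N22 := drsubmx N.
set P := mp_pinv N22.
have [h1 _ _ _] := mp_pinvP N22; rewrite -/P in h1.
have s21 : N12^T = N21 by rewrite /N12 trmx_ursub sN.
have s12 : N21^T = N12 by rewrite -s21 trmxK.
have s22 : N22^T = N22 by rewrite /N22 trmx_drsub sN.
set D := P^T *m N22 - 1%:M.
have D0 : N22 *m D = 0.
  have : (N22 *m P *m N22)^T = N22 by rewrite h1 s22.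
  rewrite !trmx_mul s22 mulmxA => e.
  by rewrite /D mulmxBr mulmx1 mulmxA e subrr.
have E : N12 *m D = 0.
  apply/matrixP => i j.
  have -> : (N12 *m D) i j = (N12 *m col j D) i 0.
    rewrite colE mulmxA -(colE j (N12 *m D)). by rewrite /col mxE.
  rewrite /N12 hker ?mxE //.
  by rewrite colE mulmxA D0 mul0mx.
have F1 : N12 *m P^T *m N22 = N12.
  by move/eqP: E; rewrite /D mulmxBr mulmx1 subr_eq0 mulmxA => /eqP.
set K := - (P *m N21).
have KT : K^T = - (N12 *m P^T) by rewrite /K linearN /= trmx_mul s12.
have KN22 : K^T *m N22 = - N12 by rewrite KT mulNmx F1.
set Ck := col_mx 1%:M K.
have L1 : Ck^T *m N = row_mx (N11 + K^T *m N21) 0.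
  by rewrite /Ck tr_col_mx trmx1 rowblock !mul1mx -/N11 -/N12 -/N21 -/N22 KN22 addrN.
have L2 : Ck^T *m N *m Ck = N11 + K^T *m N21.
  by rewrite L1 /Ck mul_row_col mulmx1 (mul0mx _ K) addr0.
have L3 : bf N (Ck *m a) (col_mx 0 b) = 0.
  by rewrite /bf trmx_mul -(mulmxA a^T) L1 -mulmxA mul_row_col mulmx0 (mul0mx _ b) addr0 mulmx0 mxE.
have dec : col_mx a (K *m a + b) = Ck *m a + col_mx 0 b.
  by rewrite /Ck mul_col_mx mul1mx add_col_mx addr0.
have L3s : bf N (col_mx 0 b) (Ck *m a) = 0 by rewrite (bf_sym _ _ sN) L3.
rewrite dec qfD L3 L3s addr0 addr0 qf_col0 -qf_mul L2 -/N22.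
congr (_ + _).
rewrite KT mulNmx -mulmxA -[N11 + _]/(N11 - _) !qfB; congr (_ - _).
by rewrite -qf_tr !trmx_mul s12 s21 trmxK mulmxA.
Qed.

End Key.



Section Red.
Variable R : realType.

Lemma reduce q r (N M : 'M[R]_(q + r)) : N^T = N -> Pi_set N ->
  (exists xb, 0 < qf N xb) -> (forall Z, Zset N Z -> Zset M Z) ->
  forall v, 0 <= qf N v -> 0 <= qf M v.
Proof.
move=> sN [_ hN22 hS hker] [xb hxb] HZ v hv.
set N22 := (drsubmx N : 'M_r).
set K := - (mp_pinv N22 *m (dlsubmx N : 'M_(r, q))).
set S := gschur N.
have KEY := key sN hker; rewrite -/N22 -/K -/S in KEY.
have hS' u : 0 <= qf S u := hS u.
have hneg b : qf N22 b <= 0.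
  have : 0 <= qf (- N22) b := hN22 b.
  by rewrite qfN oppr_ge0.
have ZN Z : (forall u, 0 <= qf S u + qf N22 ((Z - K) *m u)) -> Zset N Z.
  move=> h; apply/ZsetP => u.
  have -> : Z *m u = K *m u + (Z - K) *m u by rewrite mulmxBl addrC subrK.
  by rewrite KEY.
set x1 := usubmx v; set y2 := dsubmx v - K *m x1.
have hv_eq : v = col_mx x1 (K *m x1 + y2) by rewrite /y2 addrC subrK vsubmxK.
rewrite hv_eq KEY in hv.
set s := qf S x1 in hv; set g2 := qf N22 y2 in hv.
have s0 : 0 <= s := hS' x1.
have g20 : g2 <= 0 := hneg y2.
have [spos|seq0] : 0 < s \/ s = 0.
  by move: s0; rewrite le_eqVlt => /orP[/eqP ->|->]; [right|left].
-
  set w : 'rV_q := x1^T *m S + (S *m x1)^T.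
  have hw u : (w *m u) ord0 ord0 = bf S x1 u + bf S u x1.
    rewrite /w mulmxDl mxE; congr (_ + _).
    rewrite /bf -[in RHS](trmxK (u^T *m S *m x1)) [in RHS]mxE !trmx_mul trmxK.
    by rewrite mulmxA.
  set Z := K + (2 * s)^-1 *: (y2 *m w).
  have hZ u : (Z - K) *m u = ((2 * s)^-1 * (bf S x1 u + bf S u x1)) *: y2.
    rewrite /Z addrAC subrr add0r -scalemxAl -mulmxA mx11 hw scalerA //.
  have ZNZ : Zset N Z.
    apply: ZN => u; rewrite hZ qfZ.
    set c := bf S x1 u + bf S u x1.
    set t := (2 * s)^-1 * c.
    have ht : t * (2 * s) = c by rewrite /t mulrAC mulVf ?mul1r // gt_eqF // mulr_gt0.
    have h1 := hS' (u + (- t) *: x1); rewrite qf_lin -/s in h1.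
    have ec : bf S u x1 + bf S x1 u = c by rewrite /c addrC.
    rewrite ec in h1.
    have hg : 0 <= s + g2 by [].
    have t2 : 0 <= t ^+ 2 * (s + g2) by rewrite mulr_ge0 // sqr_ge0.
    rewrite -/g2; nra.
  have := (ZsetP M Z).1 (HZ Z ZNZ) x1.
  have -> : Z *m x1 = K *m x1 + y2.
    rewrite -[Z *m x1](subrK (K *m x1)) -mulmxBl hZ -/s addrC.
    rewrite (_ : (2 * s)^-1 * (s + s) = 1) ?scale1r //.
    by rewrite (_ : s + s = 2 * s) ?mulVf // ?gt_eqF ?mulr_gt0 //; ring.
  by rewrite -hv_eq.
-
  have g0 : g2 = 0 by rewrite seq0 add0r in hv; apply/eqP; rewrite eq_le g20 hv.
  have sym22 : (- N22)^T = - N22 by rewrite linearN /= /N22 trmx_drsub sN.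
  have ker : N22 *m y2 = 0.
    have := psd_ker sym22 (fun x => hN22 x) (y := y2).
    rewrite qfN -/g2 g0 oppr0 mulNmx => /(_ erefl) /eqP; rewrite oppr_eq0 => /eqP //.
  have HB (w : 'rV_q) : Zset N (K + y2 *m w).
    apply: ZN => u.
    rewrite addrAC subrr add0r -mulmxA mx11 qfZ -/g2 g0 mulr0 addr0; exact: hS'.
  have [x10|x1n0] := eqVneq x1 0.
  +
    set xb1 := usubmx xb; set yb2 := dsubmx xb - K *m xb1.
    have exb : xb = col_mx xb1 (K *m xb1 + yb2) by rewrite /yb2 addrC subrK vsubmxK.
    rewrite exb KEY in hxb.
    have sb : 0 < qf S xb1 by have := hneg yb2; lra.
    have xb10 : xb1 != 0 by apply: contraTneq sb => ->; rewrite qf0 ltxx.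
    set n0 := (xb1^T *m xb1) ord0 ord0.
    have n0p : 0 < n0 := cV_pos xb10.
    have ev : v = col_mx 0 y2 by rewrite hv_eq x10 mulmx0 add0r.
    rewrite ev.
    apply: (@quad_lead _ (qf M (col_mx xb1 (K *m xb1)))
                (bf M (col_mx xb1 (K *m xb1)) (col_mx 0 y2) + bf M (col_mx 0 y2) (col_mx xb1 (K *m xb1)))).
    move=> t.
    have := (ZsetP M _).1 (HZ _ (HB ((t / n0) *: xb1^T))) xb1.
    rewrite mulmxDl -mulmxA mx11 -scalemxAl mxE -/n0 divfK ?gt_eqF //.
    rewrite (_ : col_mx xb1 (K *m xb1 + t *: y2) = col_mx xb1 (K *m xb1) + t *: col_mx 0 y2).
      by rewrite qf_lin.
    by rewrite scale_col_mx scaler0 add_col_mx addr0.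
  +
    set n1 := (x1^T *m x1) ord0 ord0.
    have n1p : 0 < n1 := cV_pos x1n0.
    have := (ZsetP M _).1 (HZ _ (HB (n1^-1 *: x1^T))) x1.
    rewrite mulmxDl -mulmxA mx11 -scalemxAl mxE -/n1 mulVf ?gt_eqF // scale1r.
    by rewrite -hv_eq.
Qed.

End Red.


Unset Implicit Arguments.


Lemma part1 (R : realType) (q r : nat) (M N : 'M[R]_(q + r)) :
  (exists alpha : R, 0 <= alpha /\ psd_mx (M - alpha *: N)) ->
     forall Z : 'M[R]_(r, q), Zset N Z -> Zset M Z.
Proof.
move=> [a [a0 ha]] Z /ZsetP hN; apply/ZsetP => u.
have : 0 <= qf (M - a *: N) (col_mx u (Z *m u)) := ha _.
rewrite /qf bf_mat -/(qf M _) -/(qf N _).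
have := mulr_ge0 a0 (hN u); lra.
Qed.

Theorem mainTheorem8 (R : realType) (q r : nat) (M N : 'M[R]_(q + r)) :
  sym_mx M -> sym_mx N ->
  ((exists alpha : R, 0 <= alpha /\ psd_mx (M - alpha *: N)) ->
     forall Z : 'M[R]_(r, q), Zset N Z -> Zset M Z) /\
  (Pi_set N -> (exists lambda : R, 0 < lambda /\ eigenvalue N lambda) ->
     ((forall Z : 'M[R]_(r, q), Zset N Z -> Zset M Z) <->
      (exists alpha : R, 0 <= alpha /\ psd_mx (M - alpha *: N)))).
Proof.
move=> sM sN; split; first exact: part1.
move=> hPi [l [l0 /eigenvalueP [v hv v0]]]; split; last exact: part1.
move=> HZ.
have hxb : 0 < qf N v^T.
  rewrite /qf /bf trmxK hv -scalemxAl mxE.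
  apply: mulr_gt0 => //.
  have := @cV_pos R _ v^T; rewrite trmxK; apply.
  by apply: contraNneq v0 => h; rewrite -(trmxK v) h trmx0.
have hvec := reduce sN hPi (ex_intro (fun xb => 0 < qf N xb) _ hxb) HZ.
have [a [a0 ha]] := S_lemma hvec hxb.
exists a; split => // x.
by rewrite -[_ ord0 ord0]/(qf _ x) /qf bf_mat; exact: ha.
Qed.
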